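(* Let $D(\theta,\gamma_1,\gamma_2)$ be an adaptive estimating function on the model $\mathcal{M}$ such that, for every $\mathbb{P}\in\mathcal{M}$, $D\{\theta(\mathbb{P}),\gamma_1(\mathbb{P}),\gamma_2(\mathbb{P})\}$ is an influence curve of $\theta$ at $\mathbb{P}$ relative to $\mathcal{M}$. Suppose that for every $\mathbb{P}\in\mathcal{M}$ the sections $\mathcal{M}_1(\mathbb{P})$ and $\mathcal{M}_2(\mathbb{P})$ are convex (and their elements are mutually absolutely continuous with square-integrable likelihood ratios). Then $D$ is doubly robust.
   Context: $X$ is a random element; $\mathcal{M}$ is a set of laws of $X$. $\theta:\mathcal{M}\to\mathbb{R}^k$ is the parameter of interest and $\gamma(\mathbb{P})=(\gamma_1(\mathbb{P}),\gamma_2(\mathbb{P}))$ a parameterization of nuisance functions; $(\theta(\mathbb{P}),\gamma_1(\mathbb{P}),\gamma_2(\mathbb{P}))$ is variation independent. An (adaptive) estimating function is a function $D(\theta,\gamma)=D(X;\theta,\gamma_1,\gamma_2)$ such that for every $\mathbb{P}\in\mathcal{M}$: $\mathbb{E}_{\mathbb{P}}[D\{\theta(\mathbb{P}),\gamma(\mathbb{P})\}]=0$; $\mathbb{E}_{\mathbb{P}}[D\{\theta',\gamma(\mathbb{P})\}]\neq0$ for $\theta'\neq\theta(\mathbb{P})$ near $\theta(\mathbb{P})$; and $\mathbb{E}_{\mathbb{P}}[D\{\theta,\gamma(\mathbb{P}')\}^2]<\infty$. It is doubly robust if for every $\mathbb{P}\in\mathcal{M}$ and all values $\gamma_1,\gamma_2$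 in the ranges of $\gamma_1(\cdot),\gamma_2(\cdot)$: $\mathbb{E}_{\mathbb{P}}[D\{\theta(\mathbb{P}),\gamma_1(\mathbb{P}),\gamma_2\}]=\mathbb{E}_{\mathbb{P}}[D\{\theta(\mathbb{P}),\gamma_1,\gamma_2(\mathbb{P})\}]=0$. Sections: $\mathcal{M}_1(\mathbb{P})=\{\mathbb{P}'\in\mathcal{M}:\theta(\mathbb{P}')=\theta(\mathbb{P}),\ \gamma_2(\mathbb{P}')=\gamma_2(\mathbb{P})\}$, $\mathcal{M}_2(\mathbb{P})=\{\mathbb{P}'\in\mathcal{M}:\theta(\mathbb{P}')=\theta(\mathbb{P}),\ \gamma_1(\mathbb{P}')=\gamma_1(\mathbb{P})\}$. An influence curve of $\theta$ at $\mathbb{P}$ relative to $\mathcal{M}$ is an $\mathrm{IC}(\mathbb{P})\in L_0^2(\mathbb{P})$ such that for every regular (quadratic-mean differentiable) parametric submodel $\{\mathbb{P}_t\}\subset\mathcal{M}$ with $\mathbb{P}_0=\mathbb{P}$ and score $S$, $\frac{d}{dt}\theta(\mathbb{P}_t)\big|_{t=0}=\mathbb{E}_{\mathbb{P}}[\mathrm{IC}(\mathbb{P})S(X)]$. *)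

(* Defs.v *)
From HB Require Import structures.
From mathcomp Require Import all_boot all_order all_algebra.
From mathcomp Require Import all_classical all_reals all_analysis.
Set Implicit Arguments. Unset Strict Implicit. Unset Printing Implicit Defensive.
Import Order.TTheory GRing.Theory Num.Theory.
Import numFieldNormedType.Exports.
Local Open Scope classical_set_scope.
Local Open Scope ring_scope.

Section Defs.
Context {R : realType} {d : measure_display} {T : measurableType d}.

Definition Ex (P : probability T R) (f : T -> R) : \bar R :=
  (\int[P]_x (f x)%:E)%E.

Definition sq_int (P : probability T R) (f : T -> R) : Prop :=
  measurable_fun setT f /\ P.-integrable setT (fun x => ((f x) ^+ 2)%:E).

Definition L20 (P : probability T R) (f : T -> R) : Prop :=
  sq_int P f /\ Ex P f = 0%E.

(* {P_t : 0 <= t < eps} is a regular (quadratic-mean differentiable) parametric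
   submodel of M through P (P_0 = P) with score S. *)
Definition regular_submodel (M : set (probability T R)) (P : probability T R)
    (Pt : R -> probability T R) (S : T -> R) : Prop :=
  exists eps : R, 0 < eps /\
    (forall t, 0 <= t < eps -> M (Pt t)) /\
    (forall A, measurable A -> Pt 0 A = P A) /\
    sq_int P S /\
    exists (mu : {measure set T -> \bar R}) (p : R -> T -> R),
      (forall t, measurable_fun setT (p t)) /\
      (forall t x, 0 <= p t x) /\
      (forall t, 0 <= t < eps -> forall A, measurable A ->
          Pt t A = (\int[mu]_(x in A) (p t x)%:E)%E) /\
      (forall e : R, 0 < e -> \forall t \near 0^'+,
          (\int[mu]_x ((Num.sqrt (p t x) - Num.sqrt (p 0 x)
                         - t / 2 * S x * Num.sqrt (p 0 x)) ^+ 2)%:E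
            <= (e * t ^+ 2)%:E)%E).

Definition is_influence_curve {k : nat} (M : set (probability T R))
    (theta : probability T R -> 'I_k -> R) (P : probability T R)
    (IC : T -> 'I_k -> R) : Prop :=
  (forall i, L20 P (fun x => IC x i)) /\
  forall (Pt : R -> probability T R) (S : T -> R),
    regular_submodel M P Pt S ->
    forall i, exists c : R,
      Ex P (fun x => IC x i * S x) = c%:E /\
      (fun t => (theta (Pt t) i - theta P i) / t) @ 0^'+ --> c.

Definition variation_independent {k : nat} {G1 G2 : Type}
    (M : set (probability T R)) (theta : probability T R -> 'I_k -> R)
    (gamma1 : probability T R -> G1) (gamma2 : probability T R -> G2) : Prop :=
  forall P1 P2 P3, M P1 -> M P2 -> M P3 ->
    exists P, M P /\ theta P = theta P1 /\ gamma1 P = gamma1 P2 /\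
              gamma2 P = gamma2 P3.

Definition estimating_function {k : nat} {G1 G2 : Type}
    (M : set (probability T R)) (theta : probability T R -> 'I_k -> R)
    (gamma1 : probability T R -> G1) (gamma2 : probability T R -> G2)
    (D : T -> ('I_k -> R) -> G1 -> G2 -> 'I_k -> R) : Prop :=
  forall P, M P ->
    (forall i, Ex P (fun x => D x (theta P) (gamma1 P) (gamma2 P) i) = 0%E) /\
    (exists eps : R, 0 < eps /\
       forall th : 'I_k -> R, th <> theta P ->
         (forall i, `|th i - theta P i| < eps) ->
         exists i, Ex P (fun x => D x th (gamma1 P) (gamma2 P) i) <> 0%E) /\
    (forall (th : 'I_k -> R) P', M P' ->
       forall i, sq_int P (fun x => D x th (gamma1 P') (gamma2 P') i)).

Definition doubly_robust {k : nat} {G1 G2 : Type}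
    (M : set (probability T R)) (theta : probability T R -> 'I_k -> R)
    (gamma1 : probability T R -> G1) (gamma2 : probability T R -> G2)
    (D : T -> ('I_k -> R) -> G1 -> G2 -> 'I_k -> R) : Prop :=
  forall P, M P -> forall P'', M P'' -> forall i,
    Ex P (fun x => D x (theta P) (gamma1 P) (gamma2 P'') i) = 0%E /\
    Ex P (fun x => D x (theta P) (gamma1 P'') (gamma2 P) i) = 0%E.

Definition section1 {k : nat} {G1 G2 : Type}
    (M : set (probability T R)) (theta : probability T R -> 'I_k -> R)
    (gamma1 : probability T R -> G1) (gamma2 : probability T R -> G2)
    (P : probability T R) : set (probability T R) :=
  [set Q | M Q /\ theta Q = theta P /\ gamma2 Q = gamma2 P].

Definition section2 {k : nat} {G1 G2 : Type}
    (M : set (probability T R)) (theta : probability T R -> 'I_k -> R)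
    (gamma1 : probability T R -> G1) (gamma2 : probability T R -> G2)
    (P : probability T R) : set (probability T R) :=
  [set Q | M Q /\ theta Q = theta P /\ gamma1 Q = gamma1 P].

Definition convex_laws (S : set (probability T R)) : Prop :=
  forall Q1 Q2, S Q1 -> S Q2 -> forall l : R, 0 <= l <= 1 ->
    exists Q, S Q /\ forall A, measurable A ->
      Q A = (l%:E * Q1 A + (1 - l)%:E * Q2 A)%E.

Definition sq_int_likelihood_ratios (S : set (probability T R)) : Prop :=
  forall Q1 Q2, S Q1 -> S Q2 ->
    exists r : T -> R, (forall x, 0 <= r x) /\ sq_int Q2 r /\
      forall A, measurable A -> Q1 A = (\int[Q2]_(x in A) (r x)%:E)%E.

End Defs.

(* Main.v *)
Require Import Defs.
From HB Require Import structures.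
From mathcomp Require Import all_boot all_order all_algebra.
From mathcomp Require Import all_classical all_reals all_analysis.
From mathcomp Require Import ring lra measurable_realfun.
Set Implicit Arguments. Unset Strict Implicit. Unset Printing Implicit Defensive.
Import Order.TTheory GRing.Theory Num.Theory.
Import numFieldNormedType.Exports.
Local Open Scope classical_set_scope.
Local Open Scope ring_scope.

Lemma pt_bound (R : realType) (t h s : R) : 0 <= t <= h -> 0 <= 1 + t * s ->
  (Num.sqrt (1 + t * s) - 1 - t / 2 * s * 1) ^+ 2 <=
     t ^+ 2 / 4 * (s ^+ 2 * Order.min 1 (s ^+ 2 * h ^+ 2)).
Proof.
move=> /andP[t0 th] u0.
have a0 := sqrtr_ge0 (1 + t * s).
have aa := sqr_sqrtr u0.
set a := Num.sqrt (1 + t * s) in a0 aa *.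
have HE : (a - 1 - t / 2 * s * 1) ^+ 2 = ((a - 1) ^+ 2) ^+ 2 / 4.
  have -> : t / 2 * s * 1 = (a ^+ 2 - 1) / 2 by rewrite aa; field.
  by field.
have b1 : (a - 1) ^+ 2 <= (a - 1) ^+ 2 * (a + 1) ^+ 2.
  rewrite -[X in X <= _]mulr1 ler_wpM2l ?sqr_ge0//; nra.
have ts : (t * s) ^+ 2 = (a - 1) ^+ 2 * (a + 1) ^+ 2.
  have -> : t * s = a ^+ 2 - 1 by rewrite aa; ring.
  ring.
rewrite HE.
have [m1|m2] := leP 1 (s ^+ 2 * h ^+ 2).
  rewrite mulr1.
  have b2 : ((a - 1) ^+ 2) ^+ 2 <= (t * s) ^+ 2.
    rewrite ts expr2 ler_wpM2l ?sqr_ge0//; nra.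
  rewrite exprMn in b2; lra.

have b2 : ((a - 1) ^+ 2) ^+ 2 <= ((t * s) ^+ 2) ^+ 2.
  rewrite ler_sqr ?nnegrE ?sqr_ge0//; lra.
have b3 : t ^+ 2 <= h ^+ 2 by rewrite ler_sqr ?nnegrE//; lra.
have b4 : ((t * s) ^+ 2) ^+ 2 <= t ^+ 2 * (s ^+ 2 * (s ^+ 2 * h ^+ 2)).
  have b5 : 0 <= h ^+ 2 - t ^+ 2 by rewrite subr_ge0.
  have k := mulr_ge0 (mulr_ge0 (sqr_ge0 t) (sqr_ge0 (s ^+ 2))) b5.
  have -> : t ^+ 2 * (s ^+ 2 * (s ^+ 2 * h ^+ 2)) = ((t * s) ^+ 2) ^+ 2 + t ^+ 2 * (s ^+ 2) ^+ 2 * (h ^+ 2 - t ^+ 2) by ring.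
  lra.
lra.
Qed.

Section H.
Context {R : realType} {d : measure_display} {T : measurableType d}.

Lemma sq_int_integrable (P : probability T R) f :
  sq_int P f -> P.-integrable setT (EFin \o f).
Proof.
case=> mf fi.
apply: (le_integrable measurableT _ _ (integrableD measurableT (finite_measure_integrable_cst P 1 measurableT) fi)).
  exact/measurable_EFinP.
move=> x _ /=; rewrite lee_fin.
rewrite [X in _ <= X]ger0_norm; last by rewrite addr_ge0 ?sqr_ge0.
rewrite ler_norml; apply/andP; split; nra.
Qed.

Lemma sq_int_mul (P : probability T R) f g :
  sq_int P f -> sq_int P g -> P.-integrable setT (fun x => (f x * g x)%:E).
Proof.
case=> mf fi [mg gi].
apply: (le_integrable measurableT _ _ (integrableD measurableT fi gi)).
  by apply/measurable_EFinP; exact: measurable_funM.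
move=> x _ /=; rewrite lee_fin.
rewrite [X in _ <= X]ger0_norm; last by rewrite addr_ge0 ?sqr_ge0.
rewrite normrM.
have := sqr_ge0 (`|f x| - `|g x|); rewrite -(real_normK (num_real (f x))) -(real_normK (num_real (g x))); nra.
Qed.

Lemma change_density (P Q : probability T R) (r f : T -> R) :
  (forall x, 0 <= r x) -> Q.-integrable setT (EFin \o r) ->
  (forall A, measurable A -> P A = (\int[Q]_(x in A) (r x)%:E)%E) ->
  P.-integrable setT (EFin \o f) ->
  Ex P f = (\int[Q]_x (f x * r x)%:E)%E.
Proof.
move=> r0 ri PE fi.
have mr : measurable_fun setT (EFin \o r) := measurable_int _ ri.
have PQ : P `<< Q.
  apply/null_content_dominatesP => A mA QA.
  rewrite PE// null_set_integral//; exact: measurable_funS mr.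
rewrite /Ex -(Radon_Nikodym_change_of_variables PQ measurableT fi).
apply: ae_eq_integral => //.
- apply: emeasurable_funM; first exact: measurable_int fi.
  by apply: measurable_int; exact: Radon_Nikodym_integrable.
- by apply/measurable_EFinP; apply: measurable_funM;
    [exact/measurable_EFinP/(measurable_int _ fi)|exact/measurable_EFinP].
have h : ae_eq Q setT (EFin \o r) (Radon_Nikodym (charge_of_finite_measure P) Q).
  apply: integral_ae_eq => //.
  move=> E _ mE; rewrite -PE// -Radon_Nikodym_integral//.
apply: ae_eq_trans (ae_eqe_mul2l (EFin \o f) (ae_eq_sym h)) _.
by apply: aeW => x _ /=; rewrite EFinM.
Qed.

Definition cl (t : R) : R := if (0 <= t) && (t <= 1) then t else 0.

Lemma cl0 : cl 0 = 0. Proof. by rewrite /cl; case: ifP. Qed.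
Lemma cl_ge0 t : 0 <= cl t. Proof. by rewrite /cl; case: ifP => // /andP[]. Qed.
Lemma cl_le1 t : cl t <= 1. Proof. by rewrite /cl; case: ifP => // /andP[]. Qed.
Lemma clE t : 0 <= t <= 1 -> cl t = t. Proof. by rewrite /cl => ->. Qed.

Lemma sq_int_sub1 (Q : probability T R) r : sq_int Q r -> sq_int Q (fun x => r x - 1).
Proof.
case=> mr ri; split.
  by apply: measurable_funB => //; exact: measurable_cst.
have ci := finite_measure_integrable_cst Q 2 measurableT.
apply: (le_integrable measurableT _ _ (integrableD measurableT ci (integrableZl measurableT 2 ri))).
  by apply/measurable_EFinP; apply: measurable_funX; apply: measurable_funB => //; exact: measurable_cst.
move=> x _ /=; rewrite lee_fin.
rewrite [X in _ <= X]ger0_norm; last by apply: addr_ge0 => //; apply: mulr_ge0 => //; exact: sqr_ge0.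
rewrite ger0_norm ?sqr_ge0//.
have := sqr_ge0 (r x + 1); nra.
Qed.

Lemma qmd (Q : probability T R) (r : T -> R) :
  (forall x, 0 <= r x) -> sq_int Q r ->
  forall e : R, 0 < e -> \forall t \near 0^'+,
    (\int[Q]_x ((Num.sqrt (1 + cl t * (r x - 1)) - Num.sqrt (1 + cl 0 * (r x - 1))
                   - t / 2 * (r x - 1) * Num.sqrt (1 + cl 0 * (r x - 1))) ^+ 2)%:E
       <= (e * t ^+ 2)%:E)%E.
Proof.
move=> r0 hr e e0.
have [ms si] := sq_int_sub1 hr.
pose fn n x := (r x - 1) ^+ 2 * Order.min 1 ((r x - 1) ^+ 2 * harmonic n ^+ 2).
have mfn n : measurable_fun setT (fun x => (fn n x)%:E).
  apply/measurable_EFinP; apply: measurable_funM; first exact: measurable_funX.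
  apply: measurable_minr; first exact: measurable_cst.
  by apply: measurable_funM; [exact: measurable_funX|exact: measurable_cst].
have fn_ge0 n x : 0 <= fn n x.
  rewrite /fn; apply: mulr_ge0; first exact: sqr_ge0.
  by case: (leP 1 ((r x - 1) ^+ 2 * harmonic n ^+ 2)) => // _; apply: mulr_ge0; exact: sqr_ge0.
have fn_le n x : fn n x <= (r x - 1) ^+ 2 * ((r x - 1) ^+ 2 * harmonic n ^+ 2).
  rewrite /fn; case: (leP 1 ((r x - 1) ^+ 2 * harmonic n ^+ 2)) => // h1; rewrite ler_wpM2l ?sqr_ge0//.
have fn_le2 n x : fn n x <= (r x - 1) ^+ 2.
  rewrite /fn; case: (leP 1 ((r x - 1) ^+ 2 * harmonic n ^+ 2)) => h1; first by rewrite mulr1.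
  by rewrite -[X in _ <= X]mulr1 ler_wpM2l ?sqr_ge0// ltW.
have cvg0 x : (fun n => (fn n x)%:E) @ \oo --> 0%E.
  apply: cvg_EFin; first exact: nearW.
  rewrite /comp /=.
  have sq : \forall n \near \oo, cst 0 n <= fn n x <= (r x - 1) ^+ 2 * ((r x - 1) ^+ 2 * harmonic n ^+ 2).
    by apply: nearW => n /=; rewrite fn_ge0 fn_le.
  apply: (squeeze_cvgr sq (cvg_cst 0)).
  have -> : (fun n => (r x - 1) ^+ 2 * ((r x - 1) ^+ 2 * harmonic n ^+ 2)) =
      (fun n => ((r x - 1) ^+ 2 * (r x - 1) ^+ 2) * (harmonic n * harmonic n)).
    by apply/funext => n; rewrite expr2 mulrA.
  have := cvgM (cvg_cst ((r x - 1) ^+ 2 * (r x - 1) ^+ 2)) (cvgM (@cvg_harmonic R) (@cvg_harmonic R)).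
  by rewrite mulr0 mulr0 => h; apply: h; exact: _.
have fg : {ae Q, forall x n, [set: T] x -> (`|(fn n x)%:E| <= ((r x - 1) ^+ 2)%:E)%E}.
  apply: aeW => x n _; rewrite abse_EFin lee_fin ger0_norm//.
have mc : measurable_fun [set: T] (cst (0%E : \bar R) : T -> \bar R) by exact: measurable_cst.
have [_ _ hcvg] := dominated_convergence (mu := Q) measurableT mfn mc
   (aeW Q (fun x _ => cvg0 x)) si fg.
rewrite integral0 in hcvg.
have e4 : (0 : R) < 4 * e by rewrite mulr_gt0.
have ev : \forall n \near \oo, (\int[Q]_x (fn n x)%:E < (4 * e)%:E)%E.
  move/fine_cvgP: hcvg => [hfin hf].
  apply: (filterS2 _ _ hfin (cvgr_lt 0 hf _ e4)) => n fin lt.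
  by move: fin lt => /= fin lt; rewrite -(fineK fin) lte_fin.
case: ev => N _ HN.
have {HN}HN := HN N (leqnn N).
have hN1 : harmonic N <= 1 :> R by rewrite /= invf_le1 ?ltr0Sn // ler1n.
near=> t.
have t0 : 0 < t by near: t; exact: nbhs_right_gt.
have th : t < harmonic N by near: t; apply: nbhs_right_lt; exact: harmonic_gt0.
have t01 : 0 <= t <= 1 by rewrite ltW//= (le_trans (ltW th)).
rewrite (eq_integral (fun x => (((Num.sqrt (1 + t * (r x - 1)) - 1 - t / 2 * (r x - 1) * 1) ^+ 2)%:E)));
  last by move=> x _; rewrite cl0 mul0r addr0 sqrtr1 clE.
apply: (@le_trans _ _ (\int[Q]_x ((t ^+ 2 / 4)%:E * (fn N x)%:E))%E).
apply: ge0_le_integral => //.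
- by move=> x _; rewrite lee_fin sqr_ge0.
- apply/measurable_EFinP; apply: measurable_funX.
  apply: measurable_funB.
    apply: measurable_funB; last exact: measurable_cst.
    have msq : measurable_fun setT (@Num.sqrt R) := continuous_measurable_fun (@sqrt_continuous R).
    have mi : measurable_fun setT (fun x => 1 + t * (r x - 1)).
      apply: measurable_funD; first exact: measurable_cst.
      by apply: measurable_funM; first exact: measurable_cst.
    exact: (measurableT_comp msq mi).
  apply: measurable_funM; last exact: measurable_cst.
  by apply: measurable_funM; first exact: measurable_cst.
- by apply: measurable_funeM; exact: mfn.
- move=> x _; rewrite -EFinM lee_fin; apply: pt_bound.
    by rewrite ltW// ltW.
  have := r0 x; have := t01; nra.
have k0 : 0 <= t ^+ 2 / 4 by rewrite mulr_ge0// sqr_ge0.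
rewrite ge0_integralZl_EFin//; try (by move=> x _; rewrite lee_fin); try exact: mfn.
apply: (le_trans (lee_wpmul2l _ (ltW HN))); first by rewrite lee_fin mulr_ge0// sqr_ge0.
rewrite -EFinM lee_fin; lra.
Unshelve. all: by end_near.
Qed.
Lemma key (k : nat) (M : set (probability T R)) (theta : probability T R -> 'I_k -> R)
    (Q P : probability T R) (IC : T -> 'I_k -> R) (S : set (probability T R))
    (r : T -> R) i :
  is_influence_curve M theta Q IC ->
  S `<=` M -> (forall Q', S Q' -> theta Q' = theta Q) -> convex_laws S -> S P -> S Q ->
  (forall x, 0 <= r x) -> sq_int Q r ->
  (forall A, measurable A -> P A = (\int[Q]_(x in A) (r x)%:E)%E) ->
  sq_int P (fun x => IC x i) ->
  Ex P (fun x => IC x i) = 0%E.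
Proof.
move=> [ICL2 ICder] SM Sth Sconv SP SQ r0 hr PE icP.
have H t : exists Qt, S Qt /\ forall A, measurable A ->
    Qt A = ((cl t)%:E * P A + (1 - cl t)%:E * Q A)%E.
  by apply: Sconv => //; rewrite cl_ge0 cl_le1.
have [Pt HPt] := choice H.
have [mr _] := hr.
have reg : regular_submodel M Q Pt (fun x => r x - 1).
  exists 1; split; first exact: ltr01.
  split; first by move=> t _; apply: SM; case: (HPt t).
  split.
    by move=> A mA; case: (HPt 0) => _ ->//; rewrite cl0 mul0e add0e subr0 mul1e.
  split; first exact: sq_int_sub1.
  exists Q, (fun t x => 1 + cl t * (r x - 1)).
  split.
    move=> t; apply: measurable_funD; first exact: measurable_cst.
    apply: measurable_funM; first exact: measurable_cst.
    by apply: measurable_funB => //; exact: measurable_cst.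
  split.
    move=> t x; have := cl_ge0 t; have := cl_le1 t; have := r0 x; nra.
  split; last exact: qmd.
  move=> t _ A mA; case: (HPt t) => _ ->//.
  have mrA : measurable_fun A (fun x => (r x)%:E).
    by apply: measurable_funTS; exact/measurable_EFinP.
  rewrite (eq_integral (fun x => ((1 - cl t)%:E + (cl t)%:E * (r x)%:E)%E)); last first.
    by move=> x _; rewrite -EFinM -EFinD; congr EFin; ring.
  have c1 : 0 <= 1 - cl t by rewrite subr_ge0 cl_le1.
  rewrite ge0_integralD //; try (by move=> x _; rewrite lee_fin);
    try (by move=> x _; rewrite mule_ge0 // lee_fin ?cl_ge0);
    try (by apply: measurable_funeM); try (exact: measurable_cst).
  rewrite integral_cst // ge0_integralZl_EFin //; try (by move=> x _; rewrite lee_fin); try exact: cl_ge0.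
  by rewrite -PE // addeC.
have [c [hc hlim]] := ICder Pt _ reg i.
have c0 : c = 0.
  have e0 : (fun t => (theta (Pt t) i - theta Q i) / t) = cst 0.
    by apply/funext => t; rewrite Sth ?subrr ?mul0r //; case: (HPt t).
  rewrite e0 in hlim.
  exact: (cvg_unique _ hlim (cvg_cst 0)).
rewrite c0 in hc.
rewrite (change_density r0 (sq_int_integrable hr) PE (sq_int_integrable icP)).
have [icQ icQ0] := ICL2 i.
move: hc; rewrite /Ex (eq_integral (fun x => ((IC x i * r x)%:E - (IC x i)%:E)%E)); last first.
  by move=> x _; rewrite -EFinB mulrBr mulr1.
rewrite integralB //; [|exact: sq_int_mul|exact: (sq_int_integrable icQ)].
move: icQ0; rewrite /Ex => -> ; rewrite sube0 => ->.
by [].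
Qed.
End H.

Theorem theorem1 (R : realType) (d : measure_display) (T : measurableType d)
    (k : nat) (G1 G2 : Type) (M : set (probability T R))
    (theta : probability T R -> 'I_k -> R)
    (gamma1 : probability T R -> G1) (gamma2 : probability T R -> G2)
    (D : T -> ('I_k -> R) -> G1 -> G2 -> 'I_k -> R) :
  variation_independent M theta gamma1 gamma2 ->
  estimating_function M theta gamma1 gamma2 D ->
  (forall P, M P ->
     is_influence_curve M theta P
       (fun x => D x (theta P) (gamma1 P) (gamma2 P))) ->
  (forall P, M P ->
     convex_laws (section1 M theta gamma1 gamma2 P) /\
     sq_int_likelihood_ratios (section1 M theta gamma1 gamma2 P) /\
     convex_laws (section2 M theta gamma1 gamma2 P) /\
     sq_int_likelihood_ratios (section2 M theta gamma1 gamma2 P)) ->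
  doubly_robust M theta gamma1 gamma2 D.
Proof.
move=> VI EF IC CV P MP P'' MP'' i; split.
- have [Q [MQ [thQ [g1Q g2Q]]]] := VI P P P'' MP MP MP''.
  rewrite -thQ -g1Q -g2Q.
  have [_ [_ [CV2 LR2]]] := CV Q MQ.
  have SP : section2 M theta gamma1 gamma2 Q P by split => //; split.
  have SQ : section2 M theta gamma1 gamma2 Q Q by [].
  have [r [r0 [hr PE]]] := LR2 P Q SP SQ.
  apply: (key (IC Q MQ) _ _ CV2 SP SQ r0 hr PE).
  + by move=> Q' [].
  + by move=> Q' [_ []].
  + exact: (EF P MP).2.2 (theta Q) Q MQ i.
- have [Q [MQ [thQ [g1Q g2Q]]]] := VI P P'' P MP MP'' MP.
  rewrite -thQ -g1Q -g2Q.
  have [CV1 [LR1 _]] := CV Q MQ.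
  have SP : section1 M theta gamma1 gamma2 Q P by split => //; split.
  have SQ : section1 M theta gamma1 gamma2 Q Q by [].
  have [r [r0 [hr PE]]] := LR1 P Q SP SQ.
  apply: (key (IC Q MQ) _ _ CV1 SP SQ r0 hr PE).
  + by move=> Q' [].
  + by move=> Q' [_ []].
  + exact: (EF P MP).2.2 (theta Q) Q MQ i.
Qed.
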